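(* Let $n\ge 1$ be an integer. (1) If $a$ is a real number with $a>2$, then $\max\{B_i(a): 2^{n-1}\le i\le 2^{n}\}=a^{n}=B_{2^n}(a)$. (2) If $0<a<2$, then $$\min\{B_i(a): 2^{n-1}\le i\le 2^{n}\}=\begin{cases} a^{n} & \text{if } 0<a\le 1,\\ a^{n-1} & \text{if } 1<a<2.\end{cases}$$
   Context: The Stern polynomials $B_n(t)\in\mathbb{Z}[t]$, $n\ge 0$, are defined by $B_0(t)=0$, $B_1(t)=1$, $B_{2n}(t)=tB_n(t)$ and $B_{2n+1}(t)=B_n(t)+B_{n+1}(t)$ for $n\ge 1$. *)

(* Defs.v *)
From Stdlib Require Import Reals Arith.
Open Scope R_scope.

(* Evaluation at t of the Stern polynomial B_n(t), defined by
   B_0 = 0, B_1 = 1, B_{2m} = t B_m, B_{2m+1} = B_m + B_{m+1} (m >= 1).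
   Fuel-based recursion; fuel n suffices for index n since the recursive
   indices m, m+1 are < 2m, 2m+1 respectively when m >= 1. *)
Fixpoint stern_fuel (fuel : nat) (n : nat) (t : R) : R :=
  match fuel with
  | O => 0
  | S f =>
    match n with
    | O => 0
    | S O => 1
    | _ => if Nat.even n then t * stern_fuel f (Nat.div2 n) t
           else stern_fuel f (Nat.div2 n) t + stern_fuel f (S (Nat.div2 n)) t
    end
  end.

Definition stern (n : nat) (t : R) : R := stern_fuel n n t.

(* Main.v *)
Require Import Defs.
From Stdlib Require Import Reals Arith Lia Lra Psatz.
Open Scope R_scope.

Lemma fuel_eq : forall f g n t, (n <= f)%nat -> (n <= g)%nat ->
  stern_fuel f n t = stern_fuel g n t.
Proof.
  induction f; intros g n t Hf Hg.
  - assert (n = 0%nat) by lia; subst. destruct g; reflexivity.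
  - destruct g.
    + assert (n = 0%nat) by lia; subst. reflexivity.
    + destruct n as [|[|n']]; try reflexivity.
      cbn [stern_fuel Nat.even Nat.div2].
      pose proof (Nat.div2_odd n') as H.
      destruct (Nat.even n') eqn:E.
      * rewrite (IHf g); auto; lia.
      * rewrite <- Nat.negb_even, E in H. simpl in H.
        rewrite (IHf g (Nat.div2 (S (S n')))), (IHf g (S (Nat.div2 (S (S n'))))); simpl; auto; lia.
Qed.

Lemma sf_S f k t : stern_fuel (S f) (S (S k)) t =
  if Nat.even (S (S k)) then t * stern_fuel f (Nat.div2 (S (S k))) t
  else stern_fuel f (Nat.div2 (S (S k))) t + stern_fuel f (S (Nat.div2 (S (S k)))) t.
Proof. reflexivity. Qed.

Lemma stern_even m t : (1 <= m)%nat -> stern (2*m) t = t * stern m t.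
Proof.
  intros Hm. unfold stern. destruct m as [|m']; [lia|].
  replace (2 * S m')%nat with (S (S (2*m'))) by lia.
  rewrite sf_S.
  replace (Nat.even (S (S (2*m')))) with true.
  2:{ symmetry. apply Nat.even_spec. exists (S m'). lia. }
  replace (Nat.div2 (S (S (2*m')))) with (S m').
  2:{ replace (S (S (2*m'))) with (2 * S m')%nat by lia. now rewrite Nat.div2_double. }
  f_equal. apply fuel_eq; lia.
Qed.

Lemma stern_odd m t : (1 <= m)%nat -> stern (2*m+1) t = stern m t + stern (m+1) t.
Proof.
  intros Hm. unfold stern. destruct m as [|m']; [lia|].
  replace (2 * S m' + 1)%nat with (S (S (S (2*m')))) by lia.
  rewrite sf_S.
  replace (Nat.even (S (S (S (2*m'))))) with false.
  2:{ symmetry. rewrite <- Nat.negb_odd. rewrite (proj2 (Nat.odd_spec _)); [reflexivity|]. exists (S m'). lia. }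
  replace (Nat.div2 (S (S (S (2*m'))))) with (S m').
  2:{ replace (S (S (S (2*m')))) with (S (2 * S m'))%nat by lia. now rewrite Nat.div2_succ_double. }
  replace (S m' + 1)%nat with (S (S m')) by lia. f_equal; apply fuel_eq; lia.
Qed.

Lemma stern0 t : stern 0 t = 0.
Proof. reflexivity. Qed.
Lemma stern1 t : stern 1 t = 1.
Proof. reflexivity. Qed.

Lemma pow2pos k : (1 <= 2 ^ k)%nat.
Proof. pose proof (Nat.pow_nonzero 2 k). lia. Qed.

Lemma stern_pow k a : stern (2 ^ k) a = a ^ k.
Proof.
  induction k.
  - reflexivity.
  - rewrite Nat.pow_succ_r', stern_even by apply pow2pos. rewrite IHk. reflexivity.
Qed.

Lemma decomp i : (i = 0 \/ i = 1 \/ exists m, 1 <= m /\ (i = 2*m \/ i = 2*m+1))%nat.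
Proof.
  destruct (Nat.Even_or_Odd i) as [[m H]|[m H]].
  - destruct m; [left; lia|]. right; right. exists (S m); lia.
  - destruct m; [right; left; lia|]. right; right. exists (S m); lia.
Qed.

Lemma up a : 2 <= a -> forall i k, (i <= 2 ^ k)%nat -> stern i a <= a ^ k.
Proof.
  intros Ha i. induction i as [i IH] using lt_wf_ind. intros k Hk.
  destruct (decomp i) as [->|[->|[m [Hm [->| ->]]]]].
  - rewrite stern0. apply pow_le; lra.
  - rewrite stern1. apply pow_R1_Rle; lra.
  - destruct k as [|k']; [simpl in Hk; lia|].
    rewrite Nat.pow_succ_r' in Hk.
    rewrite stern_even by lia. simpl.
    apply Rmult_le_compat_l; [lra|]. apply IH; lia.
  - destruct k as [|k']; [simpl in Hk; lia|].
    rewrite Nat.pow_succ_r' in Hk.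
    rewrite stern_odd by lia. simpl.
    assert (H1 := IH m ltac:(lia) k' ltac:(lia)).
    assert (H2 := IH (m+1)%nat ltac:(lia) k' ltac:(lia)).
    assert (0 <= a ^ k') by (apply pow_le; lra). nra.
Qed.

Lemma low1 a : 0 < a <= 1 -> forall i k, (1 <= i <= 2 ^ k)%nat -> a ^ k <= stern i a.
Proof.
  intros Ha i. induction i as [i IH] using lt_wf_ind. intros k Hk.
  destruct (decomp i) as [->|[->|[m [Hm [->| ->]]]]].
  - lia.
  - rewrite stern1. rewrite <- (pow1 k). apply pow_incr; lra.
  - destruct k as [|k']; [simpl in Hk; lia|].
    rewrite Nat.pow_succ_r' in Hk.
    rewrite stern_even by lia. simpl.
    apply Rmult_le_compat_l; [lra|]. apply IH; lia.
  - destruct k as [|k']; [simpl in Hk; lia|].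
    rewrite Nat.pow_succ_r' in Hk.
    rewrite stern_odd by lia. simpl.
    assert (H1 := IH m ltac:(lia) k' ltac:(lia)).
    assert (H2 := IH (m+1)%nat ltac:(lia) k' ltac:(lia)).
    assert (0 < a ^ k') by (apply pow_lt; lra). nra.
Qed.

Lemma low2 a : 1 <= a <= 2 -> forall i k, (2 ^ k <= i <= 2 ^ S k)%nat -> a ^ k <= stern i a.
Proof.
  intros Ha i. induction i as [i IH] using lt_wf_ind. intros k Hk.
  pose proof (pow2pos k).
  rewrite Nat.pow_succ_r' in Hk.
  destruct (decomp i) as [->|[->|[m [Hm [->| ->]]]]].
  - lia.
  - destruct k as [|k']; [simpl; rewrite stern1; lra|].
    rewrite Nat.pow_succ_r' in Hk. pose proof (pow2pos k'). lia.
  - rewrite stern_even by lia.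
    destruct k as [|k'].
    + simpl in Hk. assert (m = 1%nat) by lia. subst. rewrite stern1. simpl. lra.
    + rewrite Nat.pow_succ_r' in Hk. simpl.
      apply Rmult_le_compat_l; [lra|]. apply IH; [lia|]. rewrite Nat.pow_succ_r'. lia.
  - destruct k as [|k']; [simpl in Hk; lia|].
    rewrite Nat.pow_succ_r' in Hk.
    rewrite stern_odd by lia. simpl.
    assert (H1 := IH m ltac:(lia) k' ltac:(rewrite Nat.pow_succ_r'; lia)).
    assert (H2 := IH (m+1)%nat ltac:(lia) k' ltac:(rewrite Nat.pow_succ_r'; lia)).
    assert (0 < a ^ k') by (apply pow_lt; lra). nra.
Qed.

Theorem theorem2p7 (n : nat) (Hn : (1 <= n)%nat) :
  (forall a : R, a > 2 ->
     stern (2 ^ n) a = a ^ n /\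
     (forall i : nat, (2 ^ (n - 1) <= i <= 2 ^ n)%nat -> stern i a <= a ^ n)) /\
  (forall a : R, 0 < a < 2 ->
     let m := if Rle_dec a 1 then a ^ n else a ^ (n - 1) in
     (exists i : nat, (2 ^ (n - 1) <= i <= 2 ^ n)%nat /\ stern i a = m) /\
     (forall i : nat, (2 ^ (n - 1) <= i <= 2 ^ n)%nat -> m <= stern i a)).
Proof.
  destruct n as [|n']; [lia|]. replace (S n' - 1)%nat with n' by lia.
  split.
  - intros a Ha. split; [apply stern_pow|].
    intros i Hi. apply (up a); [lra|lia].
  - intros a Ha m. unfold m. destruct (Rle_dec a 1) as [Hle|Hgt].
    + split.
      * exists (2 ^ S n')%nat. split; [rewrite Nat.pow_succ_r'; lia|apply stern_pow].
      * intros i Hi. pose proof (pow2pos n'). apply low1; [lra|lia].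
    + split.
      * exists (2 ^ n')%nat. split; [rewrite Nat.pow_succ_r'; lia|apply stern_pow].
      * intros i Hi. apply low2; [lra|lia].
Qed.
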